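(* In the parallel-links routing game with homogeneous costs described in the context, suppose either $N=2$ or all $N$ users have equal demands $r^i=R/N$. Let $\alpha^i>0$ with $\sum_i\alpha^i=1$, and let $PoS$ be the ratio of the weighted social cost of the NBS, $\sum_i\alpha^i\tilde g^i$, to the minimum over feasible profiles of the weighted social cost $J^\alpha_{sys}(\mathbf f)=\sum_i\alpha^i\sum_lf^i_lT_l(f_l)$. Then $PoS\le\max_i\alpha^i/\min_i\alpha^i$.
   Context: Parallel-links routing game: users $\mathcal N=\{1,\dots,N\}$ share parallel links $\mathcal L=\{1,\dots,L\}$ from a common source to a common destination; link $l$ has capacity $c_l$. User $i$ has demand $r^i>0$, $R=\sum_ir^i<\sum_lc_l$. A routing strategy of user $i$ is $\mathbf f^i=(f^i_l)_l$ with $f^i_l\ge0$, $\sum_lf^i_l=r^i$; feasible profiles form $\mathbf F$; $f_l=\sum_if^i_l$. Homogeneous costs: $J^i(\mathbf f)=\sum_lf^i_lT_l(f_l)$, each $T_l:[0,\infty)\to[0,\infty)$ strictly increasing, convex, continuously differentiable, with $T_l(f_l)=T(c_l-f_l)$ for $f_l<c_l$ and $T_l(f_l)=\infty$ for $f_l\ge c_l$, for a single link-independent function $T$ with $T(c_l-f_l)$ strictly increasing in $f_l$. NEP: the unique feasible $\hat{\mathbf f}$ in which each user's strategy minimizes its cost given the others'; $\hat J^i=J^i(\hat{\mathbf f})$. Bargaining: $\mathcal G$ is the set of all vectors $\sum_{m=1}^Mp_m(J^1(\mathbf f(m)),\dots,J^N(\mathbf f(m)))$ with $M$ finite, $p_m>0$,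 $\sum p_m=1$, $\mathbf f(m)\in\mathbf F$; the NBS is the unique $\tilde{\mathbf g}$ maximizing $\prod_i(\hat J^i-g^i)$ over $\mathbf g\in\mathcal G$ with $g^i\le\hat J^i$ for all $i$. *)

(* Defs.v *)
From HB Require Import structures.
From mathcomp Require Import all_boot all_order all_algebra.
From mathcomp Require Import all_classical all_reals all_analysis.
Set Implicit Arguments. Unset Strict Implicit. Unset Printing Implicit Defensive.
Import Order.TTheory GRing.Theory Num.Theory.
Import numFieldNormedType.Exports.
Local Open Scope classical_set_scope.
Local Open Scope ring_scope.

Section Routing.
Variable R : realType.
Variables N L : nat.

(* A routing profile: f i l = flow of user i on link l. *)
Definition profile := 'I_N -> 'I_L -> R.

Definition linkflow (f : profile) (l : 'I_L) : R := \sum_(i < N) f i l.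

Definition feasible (r : 'I_N -> R) (f : profile) : Prop :=
  (forall i l, 0 <= f i l) /\ (forall i, \sum_(l < L) f i l = r i).

(* all link flows below capacity, i.e. all costs J^i(f) are finite *)
Definition below_cap (c : 'I_L -> R) (f : profile) : Prop :=
  forall l, linkflow f l < c l.

Definition Tl (T : R -> R) (c : 'I_L -> R) (l : 'I_L) (x : R) : R := T (c l - x).

(* J^i(f) = sum_l f^i_l T_l(f_l)  (meaningful when below_cap c f) *)
Definition cost (T : R -> R) (c : 'I_L -> R) (f : profile) (i : 'I_N) : R :=
  \sum_(l < L) f i l * Tl T c l (linkflow f l).

Definition Jsys (T : R -> R) (c : 'I_L -> R) (alpha : 'I_N -> R) (f : profile) : R :=
  \sum_(i < N) alpha i * cost T c f i.

(* Homogeneous-cost hypotheses on T for every link l, on [0, c_l):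
   T_l >= 0, strictly increasing, convex, continuously differentiable
   (derivable on ]0,c_l[ with continuous derivative, which has a finite
   right limit at 0, i.e. extends continuously to [0,c_l)). *)
Definition homogeneous_costs (T : R -> R) (c : 'I_L -> R) : Prop :=
  forall l : 'I_L,
    [/\ forall x, 0 <= x -> x < c l -> 0 <= Tl T c l x,
        forall x y, 0 <= x -> x < y -> y < c l -> Tl T c l x < Tl T c l y,
        forall x y t, 0 <= x -> x < c l -> 0 <= y -> y < c l -> 0 <= t -> t <= 1 ->
          Tl T c l (t * x + (1 - t) * y) <= t * Tl T c l x + (1 - t) * Tl T c l y,
        (forall x, 0 < x -> x < c l -> derivable (Tl T c l) x 1) &
        ({in `]0, c l[, continuous (derive1 (Tl T c l))} /\
         exists d : R, derive1 (Tl T c l) x @[x --> 0^'+] --> d)].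

Definition unilateral (i : 'I_N) (f g : profile) : Prop :=
  forall j, j != i -> g j = f j.

Definition is_NEP T c r (f : profile) : Prop :=
  feasible r f /\ below_cap c f /\
  forall i (g : profile), feasible r g -> below_cap c g -> unilateral i f g ->
    cost T c f i <= cost T c g i.

(* the bargaining set G (restricted to vectors of finite costs) *)
Definition in_G T c r (g : 'I_N -> R) : Prop :=
  exists (M : nat) (p : 'I_M -> R) (fs : 'I_M -> profile),
    [/\ forall m, 0 < p m, \sum_(m < M) p m = 1,
        forall m, feasible r (fs m) /\ below_cap c (fs m) &
        forall i, g i = \sum_(m < M) p m * cost T c (fs m) i].

Definition is_NBS T c r (Jhat : 'I_N -> R) (g : 'I_N -> R) : Prop :=
  [/\ in_G T c r g, (forall i, g i <= Jhat i) &
      forall g', in_G T c r g' -> (forall i, g' i <= Jhat i) ->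
        \prod_(i < N) (Jhat i - g' i) <= \prod_(i < N) (Jhat i - g i)].

Definition is_sys_opt T c r alpha (f : profile) : Prop :=
  feasible r f /\ below_cap c f /\
  forall g, feasible r g -> below_cap c g -> Jsys T c alpha f <= Jsys T c alpha g.

End Routing.

(* max_i alpha^i and min_i alpha^i (N >= 1; the min uses max as neutral) *)
Definition amax (R : realType) (N : nat) (alpha : 'I_N -> R) : R :=
  \big[Num.max/0]_(i < N) alpha i.
Definition amin (R : realType) (N : nat) (alpha : 'I_N -> R) : R :=
  \big[Num.min/amax alpha]_(i < N) alpha i.

(* Main.v *)
Require Import Defs.
From HB Require Import structures.
From mathcomp Require Import all_boot all_order all_algebra.
From mathcomp Require Import all_classical all_reals all_analysis.
From mathcomp Require Import ring lra.
Import Order.TTheory GRing.Theory Num.Theory.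
Import numFieldNormedType.Exports.
Local Open Scope ring_scope.

Module Helpers.
Set Implicit Arguments. Unset Strict Implicit.
Section PA.

Section A.
Variables (R : realType) (N L : nat) (T : R -> R) (c : 'I_L -> R) (r : 'I_N -> R).

Lemma linkflow_ge0 (f : profile R N L) : feasible r f -> forall l, 0 <= linkflow f l.
Proof. by move=> [f0 _] l; apply: sumr_ge0 => i _. Qed.

Lemma Tl_ge0 (f : profile R N L) l : homogeneous_costs T c -> feasible r f -> below_cap c f ->
  0 <= Tl T c l (linkflow f l).
Proof.
move=> hc ff bf; case: (hc l) => H1 _ _ _ _; apply: H1; last exact: bf.
exact: linkflow_ge0.
Qed.

Lemma cost_ge0 (f : profile R N L) i : homogeneous_costs T c -> feasible r f -> below_cap c f ->
  0 <= cost T c f i.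
Proof.
move=> hc ff bf; apply: sumr_ge0 => l _; apply: mulr_ge0; first by case: ff.
exact: Tl_ge0.
Qed.

Lemma sum_cost (f : profile R N L) :
  \sum_i cost T c f i = \sum_l linkflow f l * Tl T c l (linkflow f l).
Proof.
rewrite /cost exchange_big /=; apply: eq_bigr => l _.
by rewrite /linkflow mulr_suml.
Qed.

Lemma inG_ge0 g i : homogeneous_costs T c -> in_G T c r g -> 0 <= g i.
Proof.
move=> hc [M [p [fs [p0 _ ffs ->]]]]; apply: sumr_ge0 => m _.
apply: mulr_ge0; first exact: ltW.
by case: (ffs m) => ff bf; apply: cost_ge0.
Qed.

Lemma sum_linkflow (f : profile R N L) : feasible r f ->
  \sum_l linkflow f l = \sum_i r i.
Proof.
move=> [_ fr]; rewrite /linkflow exchange_big /=.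
by apply: eq_bigr => i _; rewrite fr.
Qed.

End A.

Lemma final_step (R : realType) (N : nat) (alpha g co : 'I_N -> R) :
  (0 < N)%N -> (forall i, 0 < alpha i) -> (forall i, 0 <= g i) -> (forall i, 0 <= co i) ->
  \sum_i g i <= \sum_i co i ->
  (\sum_i alpha i * g i) / (\sum_i alpha i * co i) <= amax alpha / amin alpha.
Proof.
move=> N0 a0 g0 c0 hs.
have amaxge : forall i, alpha i <= amax alpha by move=> i; exact: le_bigmax.
have aminle : forall i, amin alpha <= alpha i by move=> i; exact: bigmin_le.
have amax0 : 0 < amax alpha.
  by apply: (lt_le_trans (a0 (Ordinal N0))); apply: amaxge.
have amin0 : 0 < amin alpha.
  by apply: lt_bigmin => // i _; apply: a0.
set S := \sum_i co i.
have h1 : \sum_i alpha i * g i <= amax alpha * S.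
  apply: (le_trans (y := amax alpha * \sum_i g i)); last by rewrite ler_pM2l.
  rewrite mulr_sumr; apply: ler_sum => i _; apply: ler_wpM2r => //.
have h2 : amin alpha * S <= \sum_i alpha i * co i.
  rewrite mulr_sumr; apply: ler_sum => i _; apply: ler_wpM2r => //.
have [J0|Jpos] := eqVneq (\sum_i alpha i * co i) 0.
  by rewrite J0 invr0 mulr0; apply: divr_ge0; apply: ltW.
have Jp : 0 < \sum_i alpha i * co i.
  rewrite lt_def Jpos /=; apply: sumr_ge0 => i _; apply: mulr_ge0 => //; exact: ltW.
rewrite ler_pdivrMr // mulrAC ler_pdivlMr //.
apply: (le_trans (y := amax alpha * S * amin alpha)).
  by rewrite ler_pM2r.
by rewrite -mulrA ler_pM2l // mulrC.
Qed.

End PA.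
Section PB.

Lemma AGM_ord (R : realType) (N : nat) (E : 'I_N -> R) :
  (forall i, 0 <= E i) -> \prod_i E i <= ((\sum_i E i) / N%:R) ^+ N.
Proof.
move=> E0.
have := (leif_AGM (A := predT) (E := E) (fun i _ => E0 i)).1.
by rewrite /= cardE -cardT card_ord.
Qed.

Lemma nbs_sum_bound (R : realType) (N L : nat) T c r (J g : 'I_N -> R)
  (p : profile R N L) (d : R) :
  (0 < N)%N -> is_NBS T c r J g -> feasible r p -> below_cap c p ->
  (forall i, cost T c p i = J i - d) -> 0 <= d ->
  \sum_i g i <= \sum_i J i - N%:R * d.
Proof.
move=> N0 [_ gle opt] fp bp Hp d0.
have Gp : in_G T c r (cost T c p).
  exists 1%N, (fun _ => 1), (fun _ => p); split => //.
  - by rewrite big_ord1.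
  - by move=> i; rewrite big_ord1 mul1r.
have := opt _ Gp; rewrite /=.
have -> : \prod_(i < N) (J i - cost T c p i) = d ^+ N.
  under eq_bigr => i _ do rewrite Hp subKr.
  by rewrite prodr_const cardE -cardT card_ord.
have Hle : forall i, cost T c p i <= J i by move=> i; rewrite Hp lerBlDr lerDl.
move=> /(_ Hle) H1.
have E0 : forall i, 0 <= J i - g i by move=> i; rewrite subr_ge0.
have H2 := @AGM_ord R N (fun i => J i - g i) E0.
have : d ^+ N <= ((\sum_i (J i - g i)) / N%:R) ^+ N by apply: le_trans H2.
rewrite ler_pXn2r // ?nnegrE //; last first.
  by apply: divr_ge0 => //; apply: sumr_ge0.
rewrite ler_pdivlMr ?ltr0n // sumrB => H3.
by rewrite lerBrDr -lerBrDl mulrC.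
Qed.

End PB.
Section PC.

Lemma key_claim (R : realType) (N L : nat) T c r (J g : 'I_N -> R) (S : R) :
  (0 < N)%N -> is_NBS T c r J g ->
  (0 <= (\sum_i J i - S) / N%:R -> exists p : profile R N L,
     [/\ feasible r p, below_cap c p &
         forall i, cost T c p i = J i - (\sum_i J i - S) / N%:R]) ->
  \sum_i g i <= S.
Proof.
move=> N0 nbs Hex.
have gle : \sum_i g i <= \sum_i J i by case: nbs => _ gl _; apply: ler_sum => i _.
have [dneg|dpos] := ltP ((\sum_i J i - S) / N%:R) 0.
  apply: (le_trans gle).
  by move: dneg; rewrite pmulr_llt0 ?invr_gt0 ?ltr0n // subr_lt0 => /ltW.
have [p [fp bp hp]] := Hex dpos.
have := @nbs_sum_bound R N L T c r J g p _ N0 nbs fp bp hp dpos.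
by rewrite mulrC divfK ?pnatr_eq0 -?lt0n // subKr.
Qed.

Lemma equal_profile (R : realType) (N L : nat) T c r (f : profile R N L) :
  (0 < N)%N -> feasible r f -> below_cap c f ->
  (forall i, r i = (\sum_j r j) / N%:R) ->
  exists p : profile R N L,
     [/\ feasible r p, below_cap c p &
         forall i, cost T c p i = (\sum_j cost T c f j) / N%:R].
Proof.
move=> N0 ff bf req.
have Nn0 : N%:R != 0 :> R by rewrite pnatr_eq0 -lt0n.
pose p : profile R N L := fun i l => linkflow f l / N%:R.
have lp : forall l, linkflow p l = linkflow f l.
  move=> l; rewrite /linkflow /p sumr_const card_ord -[_ / _ *+ _]mulr_natr.
  by rewrite divfK.
exists p; split.
- split.
    move=> i l; apply: divr_ge0; last exact: ler0n.
    exact: (linkflow_ge0 ff).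
  move=> i; rewrite /p -mulr_suml (sum_linkflow ff) -(req i) //.
- by move=> l; rewrite lp; apply: bf.
- move=> i; rewrite sum_cost /cost mulr_suml; apply: eq_bigr => l _.
  by rewrite lp /p mulrAC.
Qed.

End PC.
Section PN.

Section NEup.
Variables (R : realType) (N L : nat) (T : R -> R) (c : 'I_L -> R) (r : 'I_N -> R).
Hypothesis hc : homogeneous_costs T c.

Lemma Tl_mono l a b : 0 <= a -> a <= b -> b < c l -> Tl T c l a <= Tl T c l b.
Proof.
move=> a0 ab bc; case: (hc l) => _ H2 _ _ _.
have [->|ab'] := eqVneq a b; first by [].
by apply/ltW/H2 => //; rewrite lt_def eq_sym ab'.
Qed.

Lemma NE_upper (fhat h : profile R N L) i :
  (forall i, 0 < r i) ->
  is_NEP T c r fhat -> feasible r h -> below_cap c h ->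
  exists x : 'I_L -> R,
    [/\ forall l, 0 <= x l /\ x l <= linkflow h l, \sum_l x l = r i &
        cost T c fhat i <= \sum_l x l * Tl T c l (linkflow h l)].
Proof.
move=> rpos [ffh [bfh ne]] fh bh.
set F := linkflow h.
pose y l := linkflow fhat l - fhat i l.
have y0 : forall l, 0 <= y l.
  move=> l; rewrite /y /linkflow (bigD1 i) //= addrAC subrr add0r.
  by apply: sumr_ge0 => j _; case: ffh.
have F0 : forall l, 0 <= F l by move=> l; apply: (linkflow_ge0 fh).
pose e l := Num.max (F l - y l) 0.
have e0 : forall l, 0 <= e l by move=> l; rewrite le_max lexx orbT.
have eF : forall l, e l <= F l.
  by move=> l; rewrite ge_max F0 andbT gerBl.
have sy : \sum_l y l = \sum_j r j - r i.
  rewrite /y sumrB (sum_linkflow ffh); congr (_ - _); by case: ffh => _ ->.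
have se : r i <= \sum_l e l.
  apply: (le_trans (y := \sum_l (F l - y l))).
    by rewrite sumrB (sum_linkflow fh) sy opprB addrC subrK.
  by apply: ler_sum => l _; rewrite le_max lexx.
have sepos : 0 < \sum_l e l by apply: lt_le_trans se.
set th := r i / \sum_l e l.
have th0 : 0 < th by apply: divr_gt0.
have th1 : th <= 1 by rewrite ler_pdivrMr // mul1r.
pose x l := th * e l.
have x0 : forall l, 0 <= x l by move=> l; apply: mulr_ge0 => //; apply: ltW.
have xe : forall l, x l <= e l by move=> l; rewrite /x ler_piMl.
have sx : \sum_l x l = r i by rewrite /x -mulr_sumr divfK // gt_eqF.
exists x; split => //.
  by move=> l; split => //; apply: le_trans (xe l) (eF l).
pose g : profile R N L := fun j => if j == i then x else fhat j.
have lg : forall l, linkflow g l = y l + x l.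
  move=> l.
  have hy : y l = \sum_(j < N | j != i) fhat j l.
    by rewrite /y /linkflow (bigD1 i) //= addrAC subrr add0r.
  rewrite hy /linkflow (bigD1 i) //= {1}/g eqxx addrC; congr (_ + _).
  by apply: eq_bigr => j /negbTE ji; rewrite /g ji.
have fg : feasible r g.
  split.
    by move=> j l; rewrite /g; case: eqP => _ //; case: ffh.
  by move=> j; rewrite /g; case: eqP => [->//|_]; case: ffh.
have yxF : forall l, 0 < x l -> y l + x l <= F l.
  move=> l xl0.
  have : 0 < e l by apply: lt_le_trans xl0 (xe l).
  rewrite /e lt_max ltxx orbF subr_gt0 => yF.
  have := xe l; rewrite /e (max_idPl (ltW _)) ?subr_gt0 //.
  by rewrite lerBrDl.
have bg : below_cap c g.
  move=> l; rewrite lg.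
  have [xl0|] := ltP 0 (x l).
    by apply: le_lt_trans (yxF l xl0) (bh l).
  move=> xle; have -> : x l = 0 by apply/eqP; rewrite eq_le xle x0.
  rewrite addr0; apply: le_lt_trans (bfh l).
  by rewrite /y gerBl; case: ffh.
have ug : unilateral i fhat g by move=> j /negbTE ji; rewrite /g ji.
apply: (le_trans (ne i g fg bg ug)).
rewrite /cost; apply: ler_sum => l _; rewrite /g eqxx lg.
have [xl0|] := ltP 0 (x l).
  apply: ler_wpM2l => //; apply: Tl_mono => //.
  - by apply: addr_ge0.
  - exact: yxF.
move=> xle; have -> : x l = 0 by apply/eqP; rewrite eq_le xle x0.
by rewrite !mul0r.
Qed.

End NEup.

End PN.
Section PT.

Lemma interp (R : realType) (a b t : R) : b <= t -> t <= a ->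
  exists lam, [/\ 0 <= lam, lam <= 1 & lam * a + (1 - lam) * b = t].
Proof.
move=> bt ta; have [ab|ab] := eqVneq a b.
  exists 1; split => //; rewrite subrr mul0r addr0 mul1r.
  by apply/eqP; rewrite eq_le ta ab bt.
have ab' : b < a by rewrite lt_def ab (le_trans bt ta).
exists ((t - b) / (a - b)); split.
- by apply: divr_ge0; rewrite subr_ge0 // ltW.
- by rewrite ler_pdivrMr ?subr_gt0 // mul1r lerB.
- by field; rewrite subr_eq0.
Qed.

Definition o1 : 'I_2 := lift ord0 ord0.

Lemma I2_cases (i : 'I_2) : i = ord0 \/ i = o1.
Proof. by case: i => [[|[|]]] //= Hi; [left|right]; apply: val_inj. Qed.

Section Two.
Variables (R : realType) (L : nat) (T : R -> R) (c : 'I_L -> R) (r : 'I_2 -> R).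

Definition pr2 (u v : 'I_L -> R) : profile R 2 L := fun j => if j == ord0 then u else v.

Lemma linkflow_pr2 u v l : linkflow (pr2 u v) l = u l + v l.
Proof. by rewrite /linkflow big_ord_recl big_ord1. Qed.

Lemma two_profile (fhat h : profile R 2 L) :
  homogeneous_costs T c -> (forall i, 0 < r i) ->
  is_NEP T c r fhat -> feasible r h -> below_cap c h ->
  0 <= (\sum_i cost T c fhat i - \sum_i cost T c h i) / 2%:R ->
  exists p : profile R 2 L,
     [/\ feasible r p, below_cap c p &
         forall i, cost T c p i = cost T c fhat i -
            (\sum_i cost T c fhat i - \sum_i cost T c h i) / 2%:R].
Proof.
move=> hc rpos ne fh bh.
set J := cost T c fhat; set S := \sum_i cost T c h i; set d := (_ / _) => d0.
set F := linkflow h.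
set tau := fun l => Tl T c l (F l).
have [x0 [x0F sx0 A0]] := @NE_upper _ _ _ _ _ _ hc fhat h ord0 rpos ne fh bh.
have [x1 [x1F sx1 A1]] := @NE_upper _ _ _ _ _ _ hc fhat h o1 rpos ne fh bh.
set A := \sum_l x0 l * _ in A0.
set B := \sum_l x1 l * _ in A1.
have SF : S = \sum_l F l * tau l by rewrite /S sum_cost.
have sJ : \sum_i J i = J ord0 + J o1 by rewrite big_ord_recl big_ord1.
have dE : J ord0 + J o1 - S = 2%:R * d.
  by rewrite /d -sJ mulrC divfK // pnatr_eq0.
have b_t : S - B <= J ord0 - d.
  apply: (le_trans (y := S - J o1)); first by rewrite lerB.
  by move: dE d0; lra.
have t_a : J ord0 - d <= A by apply: le_trans A0; rewrite lerBlDr lerDl.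
have [lam [l0 l1 hl]] := interp b_t t_a.
pose u l := lam * x0 l + (1 - lam) * (F l - x1 l).
pose p := pr2 u (fun l => F l - u l).
have lp : forall l, linkflow p l = F l.
  by move=> l; rewrite linkflow_pr2 addrC subrK.
have uF : forall l, 0 <= u l /\ u l <= F l.
  move=> l; have [a0 aF] := x0F l; have [b0 bF] := x1F l.
  have l1' : 0 <= 1 - lam by rewrite subr_ge0.
  split.
    by apply: addr_ge0; apply: mulr_ge0 => //; rewrite subr_ge0.
  apply: (le_trans (y := lam * F l + (1 - lam) * F l)).
    apply: lerD; first by apply: ler_wpM2l.
    by apply: ler_wpM2l => //; rewrite gerBl.
  by rewrite -mulrDl addrC subrK mul1r.
have sR : \sum_l F l = r ord0 + r o1.
  by rewrite /F (sum_linkflow fh) big_ord_recl big_ord1.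
have su : \sum_l u l = r ord0.
  rewrite /u big_split /= -!mulr_sumr sx0 sumrB sR sx1.
  by rewrite addrK mulrBl mul1r addrC subrK.
have cost0 : cost T c p ord0 = J ord0 - d.
  rewrite /cost; under eq_bigr => l _ do rewrite lp.
  rewrite -hl /p /pr2 /= /u /A /B SF.
  under eq_bigr => l _ do rewrite mulrDl -!mulrA.
  rewrite big_split /= -!mulr_sumr; congr (_ + _); congr (_ * _).
  by rewrite -sumrB; apply: eq_bigr => l _; rewrite mulrBl.
exists p; split.
- split.
    move=> j l; rewrite /p /pr2; case: eqP => _; first by case: (uF l).
    by rewrite subr_ge0; case: (uF l).
  move=> j; case: (I2_cases j) => ->; rewrite /p /pr2 //=.
  by rewrite sumrB su sR addrC addKr.
- by move=> l; rewrite lp; apply: bh.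
- move=> i; case: (I2_cases i) => -> //.
  have : \sum_i cost T c p i = S by rewrite sum_cost /S sum_cost; apply: eq_bigr => l _; rewrite lp.
  rewrite big_ord_recl big_ord1 cost0 -/o1 => H.
  have -> : cost T c p o1 = S - (J ord0 - d) by rewrite -H addrC addKr.
  by move: dE; lra.
Qed.
End Two.

End PT.
Section AN.
Local Open Scope classical_set_scope.

Lemma right_of_dnbhs (R : realType) (f : R -> R) (l : R) :
  f x @[x --> 0^'] --> l -> f x @[x --> 0^'+] --> l.
Proof.
move=> hf; apply: cvg_trans hf; apply: cvg_app.
by apply: within_subset => x /= /gt_eqF ->.
Qed.

Lemma quot_cvg (R : realType) (f : R -> R) (x v : R) : derivable f x 1 ->
  (fun t => t^-1 * (f (t * v + x) - f x)) @ 0^'+ --> v * 'D_1 f x.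
Proof.
move=> d1.
have dv : derivable f x v by apply: diff_derivable; apply/derivable1_diffP.
have -> : v * 'D_1 f x = 'D_v f x.
  have df : differentiable f x by apply/derivable1_diffP.
  rewrite !deriveE //.
  by rewrite -{2}(mulr1 v) -[v * 1]/(v *: 1) linearZ.
apply: right_of_dnbhs.
exact: dv.
Qed.

Lemma deriv_pos (R : realType) (f : R -> R) (x c0 : R) : 0 < x -> x < c0 ->
  derivable f x 1 ->
  (forall a b, 0 <= a -> a < b -> b < c0 -> f a < f b) ->
  (forall a b t, 0 <= a -> a < c0 -> 0 <= b -> b < c0 -> 0 <= t -> t <= 1 ->
     f (t * a + (1 - t) * b) <= t * f a + (1 - t) * f b) ->
  0 < 'D_1 f x.
Proof.
move=> x0 xc d1 inc conv.
have x0c : 0 < c0 by apply: lt_trans xc.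
have hq := @quot_cvg R f x (-1) d1.
set s := (f x - f 0) / x.
have s0 : 0 < s by apply: divr_gt0 => //; rewrite subr_gt0; apply: inc.
suff : - 1 * 'D_1 f x <= - s by rewrite mulN1r lerN2 => /(lt_le_trans s0).
apply: (cvgr_to_le hq).
near=> t.
have t0 : 0 < t by near: t; apply: nbhs_right_gt.
have tx : t < x by near: t; apply: nbhs_right_lt.
set lam := 1 - t / x.
have l0 : 0 <= lam by rewrite /lam subr_ge0 ler_pdivrMr // mul1r ltW.
have l1 : lam <= 1 by rewrite /lam gerBl; apply: divr_ge0; apply: ltW.
have := conv x 0 lam (ltW x0) xc (lexx 0) x0c l0 l1.
have -> : lam * x + (1 - lam) * 0 = t * -1 + x.
  by rewrite mulr0 addr0 /lam mulrBl mul1r divfK ?gt_eqF // mulrN1 addrC.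
move=> H.
have E : lam * f x + (1 - lam) * f 0 - f x = t * - s.
  rewrite /lam /s; field; exact: lt0r_neq0.
rewrite mulrC ler_pdivrMr // [- s * t]mulrC -E.
by rewrite lerD2r.
Unshelve. all: by end_near.
Qed.

Lemma cvg_sumR (R : realType) (L : nat) (G : 'I_L -> R -> R) (lm : 'I_L -> R) :
  (forall l, G l t @[t --> 0^'+] --> lm l) ->
  (\sum_l G l t) @[t --> 0^'+] --> \sum_l lm l.
Proof.
move=> hG; rewrite /index_enum; elim: (Finite.enum _) => [|i s IH].
  rewrite big_nil; under eq_cvg do rewrite big_nil; exact: cvg_cst.
rewrite big_cons; under eq_cvg do rewrite big_cons.
by apply: cvgD => //; apply: hG.
Qed.


Section Sym.
Variables (R : realType) (N L : nat) (T : R -> R) (c : 'I_L -> R) (r : 'I_N -> R).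
Hypothesis hc : homogeneous_costs T c.

Definition repl (f : profile R N L) (i : 'I_N) (x : 'I_L -> R) : profile R N L :=
  fun k => if k == i then x else f k.

Lemma linkflow_repl f i x l :
  linkflow (repl f i x) l = linkflow f l - f i l + x l.
Proof.
rewrite /linkflow (bigD1 i) //= [in RHS](bigD1 i) //= /repl eqxx.
rewrite [f i l + _]addrC addrK addrC; congr (_ + _).
by apply: eq_bigr => k /negbTE ->.
Qed.

Lemma NE_sym (fhat : profile R N L) i j :
  is_NEP T c r fhat -> r i = r j -> forall l, fhat i l = fhat j l.
Proof.
move=> [ff [bf ne]] rij.
have [<-//|nij] := eqVneq i j.
set a := fhat i; set b := fhat j.
pose dd l := b l - a l.
set F := linkflow fhat.
pose tau l := Tl T c l.
have a0 : forall l, 0 <= a l by move=> l; case: ff => f0 _; apply: f0.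
have b0 : forall l, 0 <= b l by move=> l; case: ff => f0 _; apply: f0.
have aF : forall l, a l <= F l.
  move=> l; rewrite /F /linkflow (bigD1 i) //= lerDl.
  by apply: sumr_ge0 => k _; case: ff.
have bF : forall l, b l <= F l.
  move=> l; rewrite /F /linkflow (bigD1 j) //= lerDl.
  by apply: sumr_ge0 => k _; case: ff.
pose gi t := repl fhat i (fun l => a l + t * dd l).
pose gj t := repl fhat j (fun l => b l - t * dd l).
have lgi : forall t l, linkflow (gi t) l = t * dd l + F l.
  by move=> t l; rewrite linkflow_repl -/a -/F /dd; ring.
have lgj : forall t l, linkflow (gj t) l = t * - dd l + F l.
  by move=> t l; rewrite linkflow_repl -/b -/F /dd; ring.
have sa : \sum_l a l = r i by case: ff => _ ->.
have sb : \sum_l b l = r j by case: ff => _ ->.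
have fgi : forall t, 0 <= t -> t <= 1 -> feasible r (gi t).
  move=> t t0 t1; split.
    move=> k l; rewrite /gi /repl; case: eqP => _; last by case: ff.
    have -> : a l + t * dd l = (1 - t) * a l + t * b l by rewrite /dd; ring.
    by apply: addr_ge0; apply: mulr_ge0; rewrite ?subr_ge0.
  move=> k; rewrite /gi /repl; case: eqP => [->|_]; last by case: ff.
  rewrite big_split /= -mulr_sumr /dd sumrB sa sb rij; ring.
have fgj : forall t, 0 <= t -> t <= 1 -> feasible r (gj t).
  move=> t t0 t1; split.
    move=> k l; rewrite /gj /repl; case: eqP => _; last by case: ff.
    have -> : b l - t * dd l = (1 - t) * b l + t * a l by rewrite /dd; ring.
    by apply: addr_ge0; apply: mulr_ge0; rewrite ?subr_ge0.
  move=> k; rewrite /gj /repl; case: eqP => [->|_]; last by case: ff.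
  rewrite sumrB -mulr_sumr /dd sumrB sa sb rij; ring.
have capn : \forall t \near 0^'+, forall l,
    t * dd l + F l < c l /\ t * - dd l + F l < c l.
  apply: filter_forall => l.
  have e0 : 0 < (c l - F l) / (`|dd l| + 1).
    by apply: divr_gt0; [rewrite subr_gt0; apply: bf | apply: ltr_wpDl].
  near=> t.
  have t0 : 0 < t by near: t; apply: nbhs_right_gt.
  have te : t < (c l - F l) / (`|dd l| + 1) by near: t; apply: nbhs_right_lt.
  have td : t * `|dd l| < c l - F l.
    apply: (le_lt_trans (y := t * (`|dd l| + 1))).
      by rewrite ler_pM2l // lerDl.
    by rewrite -ltr_pdivlMr // ltr_wpDl.
  split; rewrite -ltrBrDr; apply: le_lt_trans td; rewrite ler_pM2l //.
    exact: ler_norm.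
  by rewrite -normrN ler_norm.
pose Qp l t := t^-1 * (tau l (t * dd l + F l) - tau l (F l)).
pose Qm l t := t^-1 * (tau l (t * - dd l + F l) - tau l (F l)).
pose Phi t := \sum_l (a l * Qp l t + b l * Qm l t + dd l * (t * (Qp l t - Qm l t))).
have Phi0 : \forall t \near 0^'+, 0 <= Phi t.
  near=> t.
  have t0 : 0 < t by near: t; apply: nbhs_right_gt.
  have t1 : t < 1 by near: t; apply: nbhs_right_lt.
  have cp : forall l, t * dd l + F l < c l /\ t * - dd l + F l < c l.
    by near: t; apply: capn.
  have bgi : below_cap c (gi t) by move=> l; rewrite lgi; case: (cp l).
  have bgj : below_cap c (gj t) by move=> l; rewrite lgj; case: (cp l).
  have ugi : unilateral i fhat (gi t) by move=> k /negbTE ki; rewrite /gi /repl ki.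
  have ugj : unilateral j fhat (gj t) by move=> k /negbTE kj; rewrite /gj /repl kj.
  have Hi := ne i (gi t) (fgi t (ltW t0) (ltW t1)) bgi ugi.
  have Hj := ne j (gj t) (fgj t (ltW t0) (ltW t1)) bgj ugj.
  have E : t * Phi t = (cost T c (gi t) i - cost T c fhat i) +
                       (cost T c (gj t) j - cost T c fhat j).
    rewrite /cost -!sumrB -big_split mulr_sumr /=; apply: eq_bigr => l _.
    rewrite lgi lgj /gi /gj /repl !eqxx -/a -/b -/F /Qp /Qm /tau /dd.
    by field; rewrite gt_eqF.
  have : 0 <= t * Phi t by rewrite E; apply: addr_ge0; rewrite subr_ge0.
  by rewrite pmulr_rge0.
have F0 : forall l, 0 <= F l by move=> l; apply: le_trans (a0 l) (aF l).
have Fpos : forall l, dd l != 0 -> 0 < F l.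
  move=> l dn; rewrite lt_def F0 andbT; apply/negP => /eqP FE.
  have al : a l = 0 by apply/eqP; rewrite eq_le a0 -FE aF.
  have bl : b l = 0 by apply/eqP; rewrite eq_le b0 -FE bF.
  by move: dn; rewrite /dd al bl subrr eqxx.
have der : forall l, dd l != 0 -> derivable (tau l) (F l) 1.
  move=> l dn; case: (hc l) => _ _ _ H4 _; apply: H4; first exact: Fpos.
  exact: bf.
pose D l := 'D_1 (tau l) (F l).
have cQp : forall l, Qp l t @[t --> 0^'+] --> dd l * D l.
  move=> l; have [d0|dn0] := eqVneq (dd l) 0.
    have -> : Qp l = fun _ => 0.
      by apply/funext => t; rewrite /Qp d0 mulr0 add0r subrr mulr0.
    rewrite d0 mul0r; exact: cvg_cst.
  exact: quot_cvg (der l dn0).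
have cQm : forall l, Qm l t @[t --> 0^'+] --> - dd l * D l.
  move=> l; have [d0|dn0] := eqVneq (dd l) 0.
    have -> : Qm l = fun _ => 0.
      by apply/funext => t; rewrite /Qm d0 oppr0 mulr0 add0r subrr mulr0.
    rewrite d0 oppr0 mul0r; exact: cvg_cst.
  exact: quot_cvg (der l dn0).
have ct : t @[t --> 0^'+] --> (0:R) by apply: cvg_at_right_filter; apply: cvg_id.
have cPhi : Phi t @[t --> 0^'+] --> \sum_l (a l * (dd l * D l) + b l * (- dd l * D l)
     + dd l * (0 * (dd l * D l - - dd l * D l))).
  apply: cvg_sumR => l.
  apply: cvgD; first apply: cvgD.
  - exact: cvgMl_tmp.
  - exact: cvgMl_tmp.
  - apply: cvgMl_tmp; apply: cvgM => //; apply: cvgB => //.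
have := cvgr_to_ge cPhi Phi0.
have -> : \sum_l (a l * (dd l * D l) + b l * (- dd l * D l)
     + dd l * (0 * (dd l * D l - - dd l * D l))) = - \sum_l dd l ^+ 2 * D l.
  by rewrite -sumrN; apply: eq_bigr => l _; rewrite /dd; ring.
rewrite oppr_ge0 => Hs.
have Dpos : forall l, dd l != 0 -> 0 < D l.
  move=> l dn; case: (hc l) => _ H2 H3 _ _.
  exact: (deriv_pos (Fpos l dn) (bf l) (der l dn) H2 H3).
have nn : forall l, 0 <= dd l ^+ 2 * D l.
  move=> l; have [d0|dn0] := eqVneq (dd l) 0; first by rewrite d0 expr0n mul0r.
  by apply: mulr_ge0; [apply: sqr_ge0 | apply: ltW; apply: Dpos].
have S0 : \sum_l dd l ^+ 2 * D l = 0 by apply/eqP; rewrite eq_le Hs sumr_ge0.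
have := psumr_eq0P (fun l _ => nn l) S0 => Z.
move=> l; have [d0|dn0] := eqVneq (dd l) 0.
  by apply/esym/eqP; rewrite -subr_eq0; apply/eqP.
have := Z l isT; move/eqP; rewrite mulf_eq0 expf_eq0 (negbTE dn0) andbF /=.
by rewrite gt_eqF // Dpos.
Unshelve. all: by end_near.
Qed.
End Sym.

End AN.
End Helpers.
Import Helpers.

Theorem corollary3p1 (R : realType) (N L : nat)
    (c : 'I_L -> R) (r : 'I_N -> R) (T : R -> R) (alpha : 'I_N -> R)
    (fhat : profile R N L) (gtil : 'I_N -> R) (fopt : profile R N L) :
  (forall l, 0 < c l) ->
  (forall i, 0 < r i) ->
  \sum_(i < N) r i < \sum_(l < L) c l ->
  homogeneous_costs T c ->
  (N = 2%N \/ forall i, r i = (\sum_(j < N) r j) / N%:R) ->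
  (forall i, 0 < alpha i) ->
  \sum_(i < N) alpha i = 1 ->
  is_NEP T c r fhat ->
  is_NBS T c r (cost T c fhat) gtil ->
  is_sys_opt T c r alpha fopt ->
  (\sum_(i < N) alpha i * gtil i) / Jsys T c alpha fopt <= amax alpha / amin alpha.
Proof.
move=> cpos rpos _ hc hcase apos asum ne nbs [ffo [bfo _]].
have N0 : (0 < N)%N.
  have [N0'|//] := posnP N.
  have a0 : \sum_(i < N) alpha i = 0.
    by apply: big1 => i _; exfalso; have := ltn_ord i; rewrite {2}N0'.
  by move: asum; rewrite a0 => /eqP; rewrite eq_sym oner_eq0.
have gS : \sum_i gtil i <= \sum_i cost T c fopt i.
  apply: (key_claim N0 nbs) => d0.
  case: hcase => [N2|req].
    subst N.
    by apply: two_profile => //; case: ne.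
  have Jc : forall i, cost T c fhat i = cost T c fhat (Ordinal N0).
    move=> i; rewrite /cost; apply: eq_bigr => l _.
    by rewrite (NE_sym hc ne (i:=i) (j:=Ordinal N0)) // !req.
  have [p [fp bp hp]] := equal_profile T N0 ffo bfo req.
  exists p; split => // i.
  have sJ : \sum_k cost T c fhat k = N%:R * cost T c fhat (Ordinal N0).
    by rewrite (eq_bigr _ (fun k _ => Jc k)) sumr_const card_ord mulr_natl.
  rewrite hp (Jc i) sJ.
  by field; rewrite pnatr_eq0 -lt0n.
apply: final_step => //.
- by move=> i; case: nbs => inG _ _; apply: (inG_ge0 (c:=c) (r:=r)) => //.
- by move=> i; apply: (cost_ge0 (r:=r)) => //.
Qed.
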